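(* For $n\ge2$ and all $P,Q\in\Gamma_n$, $D_{T\Delta}(P\|Q)\le 3D_{TJ}(P\|Q)$.
   Context: $\Gamma_n=\{P=(p_1,\dots,p_n): p_i>0,\ \sum p_i=1\}$. $\Delta(P\|Q)=\sum_{i=1}^n\frac{(p_i-q_i)^2}{p_i+q_i}$; $J(P\|Q)=\sum_{i=1}^n(p_i-q_i)\ln\frac{p_i}{q_i}$; $T(P\|Q)=\sum_{i=1}^n\frac{p_i+q_i}{2}\ln\frac{p_i+q_i}{2\sqrt{p_iq_i}}$. $D_{T\Delta}=T-\frac14\Delta$, $D_{TJ}=T-\frac18J$. *)

(* Defs.v *)
(* concrete reals R. Probability vectors are functions nat -> R,
   only the indices 0..n-1 matter. *)
From Stdlib Require Import Reals.
Open Scope R_scope.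

Fixpoint sumn (n : nat) (f : nat -> R) : R :=
  match n with
  | O => 0
  | S m => sumn m f + f m
  end.

Definition Gamma (n : nat) (p : nat -> R) : Prop :=
  (forall i, (i < n)%nat -> 0 < p i) /\ sumn n p = 1.

Definition Delta (n : nat) (p q : nat -> R) : R :=
  sumn n (fun i => (p i - q i) ^ 2 / (p i + q i)).

Definition Jdiv (n : nat) (p q : nat -> R) : R :=
  sumn n (fun i => (p i - q i) * ln (p i / q i)).

Definition Tdiv (n : nat) (p q : nat -> R) : R :=
  sumn n (fun i => (p i + q i) / 2 * ln ((p i + q i) / (2 * sqrt (p i * q i)))).

Definition D_TDelta (n : nat) (p q : nat -> R) : R := Tdiv n p q - Delta n p q / 4.
Definition D_TJ (n : nat) (p q : nat -> R) : R := Tdiv n p q - Jdiv n p q / 8.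

(* Main.v *)
Require Import Defs.
From Stdlib Require Import Reals Lra Lia.
From Coquelicot Require Import Coquelicot.
Open Scope R_scope.
Definition psi u := 2*u*(3-2*u^2)/(3*(1-u^2)) - (ln(1+u) - ln(1-u)).
Lemma psi_der u : -1 < u < 1 -> is_derive psi u (4*u^4/(3*(1-u^2)^2)).
Proof. intros Hu. unfold psi. auto_derive.
- repeat split; try nra.
- assert (1+u<>0) by lra. assert (1-u<>0) by lra. assert (1-u^2<>0) by nra.
  assert (1 + - u <> 0) by lra. assert (1 + - (u*(u*1)) <> 0) by nra.
  field. repeat split; auto.
Qed.
Lemma psi_pos u : 0 <= u < 1 -> 0 <= psi u.
Proof. intros Hu. destruct (Req_dec u 0) as [->|H0].
- unfold psi. replace (1+0) with 1 by ring. replace (1-0) with 1 by ring. rewrite ln_1. field_simplify; lra.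
- destruct (MVT_cor2 psi (fun u => 4*u^4/(3*(1-u^2)^2)) 0 u) as [c [Hc1 Hc2]]; try lra.
  + intros c Hc. apply is_derive_Reals. apply psi_der. lra.
  + assert (psi 0 = 0). { unfold psi. replace (1+0) with 1 by ring. replace (1-0) with 1 by ring. rewrite ln_1. field. }
    assert (0 <= 4*c^4/(3*(1-c^2)^2)). { apply Rmult_le_pos. assert (0<= c^4) by (apply pow_le; lra). lra.
      apply Rlt_le, Rinv_0_lt_compat. assert (0 < (1-c^2)) by nra. assert (0<(1-c^2)^2) by (apply pow_lt; lra). lra. }
    nra.
Qed.
Definition F u := -(ln(1+u)+ln(1-u)) - 3/4*u*(ln(1+u) - ln(1-u)) + u^2/2.
Lemma F_der u : -1 < u < 1 -> is_derive F u (u/(2*(1-u^2)) + u - 3/4*(ln(1+u) - ln(1-u))).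
Proof. intros Hu. unfold F. auto_derive.
- repeat split; try nra.
- assert (1+u<>0) by lra. assert (1-u<>0) by lra. assert (1-u^2<>0) by nra.
  assert (1 + - u <> 0) by lra.
  replace (1 + - u) with (1-u) by ring. field. repeat split; auto.
Qed.
Lemma F_pos0 u : 0 <= u < 1 -> 0 <= F u.
Proof. intros Hu. destruct (Req_dec u 0) as [->|H0].
- unfold F. replace (1+0) with 1 by ring. replace (1-0) with 1 by ring. rewrite ln_1. lra.
- destruct (MVT_cor2 F (fun u => u/(2*(1-u^2)) + u - 3/4*(ln(1+u) - ln(1-u))) 0 u) as [c [Hc1 Hc2]]; try lra.
  + intros c Hc. apply is_derive_Reals. apply F_der. lra.
  + assert (F 0 = 0). { unfold F. replace (1+0) with 1 by ring. replace (1-0) with 1 by ring. rewrite ln_1. field. }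
    assert (0 <= c/(2*(1-c^2)) + c - 3/4*(ln(1+c) - ln(1-c))).
    { pose proof (psi_pos c ltac:(lra)) as Hp. unfold psi in Hp.
      assert (0 < 1-c^2) by nra.
      assert (E: c/(2*(1-c^2)) + c = 3/4 * (2*c*(3-2*c^2)/(3*(1-c^2)))) by (field; lra).
      rewrite E. lra. }
    nra.
Qed.
Lemma F_even u : F (-u) = F u.
Proof. unfold F. replace (1 + - u) with (1-u) by ring. replace (1 - - u) with (1+u) by ring. set (a := ln (1+u)). set (b := ln (1-u)). field. Qed.
Lemma F_pos u : -1 < u < 1 -> 0 <= F u.
Proof. intros Hu. destruct (Rle_dec 0 u). apply F_pos0; lra.
  rewrite <- F_even. apply F_pos0; lra. Qed.
Lemma term_pos p q : 0 < p -> 0 < q ->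
  0 <= 2*((p+q)/2 * ln((p+q)/(2*sqrt(p*q)))) - 3/8*((p-q)*ln(p/q)) + (p-q)^2/(p+q)/4.
Proof. intros Hp Hq.
  set (s := p+q). set (u := (p-q)/s).
  assert (Hs : 0 < s) by (unfold s; lra).
  assert (Hu1 : 1 + u = 2*p/s) by (unfold u, s; field; lra).
  assert (Hu2 : 1 - u = 2*q/s) by (unfold u, s; field; lra).
  assert (Hu : -1 < u < 1).
  { assert (0 < 2*q/s) by (apply Rdiv_lt_0_compat; lra). assert (0 < 2*p/s) by (apply Rdiv_lt_0_compat; lra). lra. }
  assert (HA : ln (p/q) = ln(1+u) - ln(1-u)).
  { rewrite <- ln_div by lra. f_equal. rewrite Hu1, Hu2. field. split; lra. }
  assert (Hsq : 0 < sqrt (p*q)) by (apply sqrt_lt_R0; nra).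
  assert (Hsq2 : sqrt (p*q) * sqrt (p*q) = p*q) by (apply sqrt_sqrt; nra).
  assert (HB : ln (s/(2*sqrt(p*q))) = -(ln(1+u)+ln(1-u))/2).
  { rewrite <- ln_mult by lra.
    assert (E : (1+u)*(1-u) = (2*sqrt(p*q)/s) * (2*sqrt(p*q)/s)).
    { rewrite Hu1, Hu2. replace (2*sqrt(p*q)/s*(2*sqrt(p*q)/s)) with (4*(sqrt(p*q)*sqrt(p*q))/(s*s)) by (field; lra). rewrite Hsq2. field. lra. }
    rewrite E. assert (0 < 2*sqrt(p*q)/s) by (apply Rdiv_lt_0_compat; lra).
    rewrite ln_mult by lra.
    replace (s/(2*sqrt(p*q))) with (/ (2*sqrt(p*q)/s)) by (field; lra).
    rewrite ln_Rinv by lra. field. }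
  fold s. rewrite HA, HB.
  assert (Hpq : p - q = s*u) by (unfold u; field; lra).
  rewrite Hpq.
  pose proof (F_pos u Hu) as HF. unfold F in HF.
  replace (2 * (s / 2 * (- (ln (1 + u) + ln (1 - u)) / 2)) - 3 / 8 * (s * u * (ln (1 + u) - ln (1 - u))) +
   (s * u) ^ 2 / s / 4) with (s/2 * (-(ln(1+u)+ln(1-u)) - 3/4*u*(ln(1+u) - ln(1-u)) + u^2/2)) by (field; lra).
  apply Rmult_le_pos; lra.
Qed.
Lemma sumn_nonneg n f : (forall i, (i < n)%nat -> 0 <= f i) -> 0 <= sumn n f.
Proof. induction n; intros H; simpl. lra.
  assert (0 <= f n) by (apply H; lia). assert (0 <= sumn n f) by (apply IHn; intros; apply H; lia). lra. Qed.

Lemma diff_eq n p q : 3 * D_TJ n p q - D_TDelta n p q =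
  sumn n (fun i => 2*((p i+q i)/2 * ln((p i+q i)/(2*sqrt(p i*q i)))) - 3/8*((p i-q i)*ln(p i/q i)) + (p i-q i)^2/(p i+q i)/4).
Proof. unfold D_TJ, D_TDelta, Tdiv, Jdiv, Defs.Delta. induction n; cbn [sumn].
  - lra.
  - rewrite <- IHn. lra. Qed.

Theorem proposition5p6 (n : nat) (p q : nat -> R) :
  (2 <= n)%nat -> Gamma n p -> Gamma n q ->
  D_TDelta n p q <= 3 * D_TJ n p q.
Proof.
  intros _ [Hp _] [Hq _].
  assert (0 <= 3 * D_TJ n p q - D_TDelta n p q); [|lra].
  rewrite diff_eq. apply sumn_nonneg. intros i Hi. apply term_pos; auto.
Qed.
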